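(* In the calculus $\lambda^{RE}$ described in the context: if $e_1\Rrightarrow^*e_2$, then for every constant $c$, $e_1\to^*c$ if and only if $e_2\to^*c$.
   Context: Syntax of $\lambda^{RE}$. Basic types $b ::= \mathsf{Bool}\mid\mathsf{Unit}$. Constants $c ::= \mathsf{true}\mid\mathsf{false}\mid\mathsf{unit}\mid (=_b)\mid (=_{(c,b)})$. Expressions $e ::= c\mid x\mid e\ e\mid \lambda x{:}\tau.\,e\mid \mathsf{BEq}_b\ e\ e\ e\mid \mathsf{XEq}_{x:\tau\to\tau}\ e\ e\ e$. Values $v ::= c\mid \lambda x{:}\tau.\,e\mid \mathsf{BEq}_b\ e\ e\ v\mid \mathsf{XEq}_{x:\tau\to\tau}\ e\ e\ v$. Types $\tau ::= \{x{:}b\mid e\}\mid x{:}\tau\to\tau\mid \mathsf{PEq}_{\tau}\{e\}\{e\}$. $e[x:=e']$ is capture-avoiding substitution. Reduction: evaluation contexts $E ::= \bullet\mid E\ e\mid v\ E\mid \mathsf{BEq}_b\ e\ e\ E\mid\mathsf{XEq}_{x:\tau\to\tau}\ e\ e\ E$; $E[e]\to E[e']$ if $e\to e'$; $(\lambda x{:}\tau.\,e)\ v\to e[x:=v]$; $(=_b)\ c_1\to(=_{(c_1,b)})$; $(=_{(c_1,b)})\ c_2\to\mathsf{true}$ if $c_1,c_2$ syntactically equal, else $\to\mathsf{false}$. $\to^*$ is the reflexive–transitive closure. Parallel reduction $e\Rrightarrow e'$ and $\tau\Rrightarrow\tau'$ is defined inductively: $x\Rrightarrow x$; $c\Rrightarrow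 c$; $\lambda x{:}\tau.e\Rrightarrow\lambda x{:}\tau'.e'$ if $\tau\Rrightarrow\tau'$, $e\Rrightarrow e'$; $e_1\ e_2\Rrightarrow e_1'\ e_2'$ if $e_i\Rrightarrow e_i'$; $(\lambda x{:}\tau.e)\ v\Rrightarrow e'[x:=v']$ if $e\Rrightarrow e'$ and $v\Rrightarrow v'$; $(=_b)\ c_1\Rrightarrow(=_{(c_1,b)})$; $(=_{(c_1,b)})\ c_2\Rrightarrow d$ where $d=\mathsf{true}$ if $c_1,c_2$ are syntactically equal and $\mathsf{false}$ otherwise; $\mathsf{BEq}_b\ e_l\ e_r\ e\Rrightarrow\mathsf{BEq}_b\ e_l'\ e_r'\ e'$ if $e_l\Rrightarrow e_l'$, $e_r\Rrightarrow e_r'$, $e\Rrightarrow e'$; $\mathsf{XEq}_{x:\tau_x\to\tau}\ e_l\ e_r\ e\Rrightarrow\mathsf{XEq}_{x:\tau_x'\to\tau'}\ e_l'\ e_r'\ e'$ if all five components parallel reduce; on types: $\{x{:}b\mid r\}\Rrightarrow\{x{:}b\mid r'\}$ if $r\Rrightarrow r'$; $x{:}\tau_x\to\tau\Rrightarrow x{:}\tau_x'\to\tau'$ if $\tau_x\Rrightarrow\tau_x'$, $\tau\Rrightarrow\tau'$; $\mathsf{PEq}_\tau\{e_l\}\{e_r\}\Rrightarrow\mathsf{PEq}_{\tau'}\{e_l'\}\{e_r'\}$ if all components parallel reduce. $\Rrightarrow^*$ is the reflexive–transitive closure of $\Rrightarrow$. *)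

(* Defs.v *)
From Stdlib Require Import Arith Relations.

Inductive basic : Type := BBool | BUnit.

Inductive const : Type :=
| CTrue | CFalse | CUnit
| CEqb (b : basic)
| CEqc (c : const) (b : basic) .

Definition basic_eq_dec (a b : basic) : {a = b} + {a <> b}.
Proof. decide equality. Defined.

Definition const_eq_dec (c1 c2 : const) : {c1 = c2} + {c1 <> c2}.
Proof. decide equality; apply basic_eq_dec. Defined.

(* Binders (de Bruijn): Lam t e binds in e; TRef b r binds in r;
   TArr tx t binds in t; XEq tx t el er e binds in t only. *)
Inductive expr : Type :=
| Const (c : const)
| Var (n : nat)
| App (e1 e2 : expr)
| Lam (t : ty) (e : expr)
| BEq (b : basic) (el er e : expr)
| XEq (tx t : ty) (el er e : expr)
with ty : Type :=
| TRef (b : basic) (r : expr)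
| TArr (tx t : ty)
| TPEq (t : ty) (el er : expr).

Fixpoint lift_e (c : nat) (e : expr) : expr :=
  match e with
  | Const k => Const k
  | Var n => if n <? c then Var n else Var (S n)
  | App e1 e2 => App (lift_e c e1) (lift_e c e2)
  | Lam t e => Lam (lift_t c t) (lift_e (S c) e)
  | BEq b el er e => BEq b (lift_e c el) (lift_e c er) (lift_e c e)
  | XEq tx t el er e => XEq (lift_t c tx) (lift_t (S c) t) (lift_e c el) (lift_e c er) (lift_e c e)
  end
with lift_t (c : nat) (t : ty) : ty :=
  match t with
  | TRef b r => TRef b (lift_e (S c) r)
  | TArr tx t => TArr (lift_t c tx) (lift_t (S c) t)
  | TPEq t el er => TPEq (lift_t c t) (lift_e c el) (lift_e c er)
  end.

Fixpoint subst_e (k : nat) (s : expr) (e : expr) : expr :=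
  match e with
  | Const c => Const c
  | Var n => if n <? k then Var n else if n =? k then s else Var (pred n)
  | App e1 e2 => App (subst_e k s e1) (subst_e k s e2)
  | Lam t e => Lam (subst_t k s t) (subst_e (S k) (lift_e 0 s) e)
  | BEq b el er e => BEq b (subst_e k s el) (subst_e k s er) (subst_e k s e)
  | XEq tx t el er e => XEq (subst_t k s tx) (subst_t (S k) (lift_e 0 s) t)
                            (subst_e k s el) (subst_e k s er) (subst_e k s e)
  end
with subst_t (k : nat) (s : expr) (t : ty) : ty :=
  match t with
  | TRef b r => TRef b (subst_e (S k) (lift_e 0 s) r)
  | TArr tx t => TArr (subst_t k s tx) (subst_t (S k) (lift_e 0 s) t)
  | TPEq t el er => TPEq (subst_t k s t) (subst_e k s el) (subst_e k s er)
  end.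

(* e[x:=v] where x is the binder of the body e *)
Definition subst0 (e v : expr) : expr := subst_e 0 v e.

Definition eq_result (c1 c2 : const) : const :=
  if const_eq_dec c1 c2 then CTrue else CFalse.

Inductive is_value : expr -> Prop :=
| VConst c : is_value (Const c)
| VLam t e : is_value (Lam t e)
| VBEq b el er v : is_value v -> is_value (BEq b el er v)
| VXEq tx t el er v : is_value v -> is_value (XEq tx t el er v).

Inductive ectx : Type :=
| EHole
| EAppL (E : ectx) (e : expr)
| EAppR (v : expr) (E : ectx)
| EBEq (b : basic) (el er : expr) (E : ectx)
| EXEq (tx t : ty) (el er : expr) (E : ectx).

Inductive ectx_wf : ectx -> Prop :=
| WHole : ectx_wf EHole
| WAppL E e : ectx_wf E -> ectx_wf (EAppL E e)
| WAppR v E : is_value v -> ectx_wf E -> ectx_wf (EAppR v E)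
| WBEq b el er E : ectx_wf E -> ectx_wf (EBEq b el er E)
| WXEq tx t el er E : ectx_wf E -> ectx_wf (EXEq tx t el er E).

Fixpoint plug (E : ectx) (e : expr) : expr :=
  match E with
  | EHole => e
  | EAppL E e2 => App (plug E e) e2
  | EAppR v E => App v (plug E e)
  | EBEq b el er E => BEq b el er (plug E e)
  | EXEq tx t el er E => XEq tx t el er (plug E e)
  end.

Inductive step : expr -> expr -> Prop :=
| step_ctx E e e' : ectx_wf E -> step e e' -> step (plug E e) (plug E e')
| step_beta t e v : is_value v -> step (App (Lam t e) v) (subst0 e v)
| step_eqb b c1 : step (App (Const (CEqb b)) (Const c1)) (Const (CEqc c1 b))
| step_eqc c1 b c2 :
    step (App (Const (CEqc c1 b)) (Const c2)) (Const (eq_result c1 c2)).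

Definition steps : expr -> expr -> Prop := clos_refl_trans expr step.

Inductive par_e : expr -> expr -> Prop :=
| par_var x : par_e (Var x) (Var x)
| par_const c : par_e (Const c) (Const c)
| par_lam t t' e e' : par_t t t' -> par_e e e' -> par_e (Lam t e) (Lam t' e')
| par_app e1 e1' e2 e2' : par_e e1 e1' -> par_e e2 e2' -> par_e (App e1 e2) (App e1' e2')
| par_beta t e e' v v' : is_value v -> par_e e e' -> par_e v v' ->
    par_e (App (Lam t e) v) (subst0 e' v')
| par_eqb b c1 : par_e (App (Const (CEqb b)) (Const c1)) (Const (CEqc c1 b))
| par_eqc c1 b c2 :
    par_e (App (Const (CEqc c1 b)) (Const c2)) (Const (eq_result c1 c2))
| par_beq b el el' er er' e e' : par_e el el' -> par_e er er' -> par_e e e' ->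
    par_e (BEq b el er e) (BEq b el' er' e')
| par_xeq tx tx' t t' el el' er er' e e' :
    par_t tx tx' -> par_t t t' -> par_e el el' -> par_e er er' -> par_e e e' ->
    par_e (XEq tx t el er e) (XEq tx' t' el' er' e')
with par_t : ty -> ty -> Prop :=
| par_tref b r r' : par_e r r' -> par_t (TRef b r) (TRef b r')
| par_tarr tx tx' t t' : par_t tx tx' -> par_t t t' -> par_t (TArr tx t) (TArr tx' t')
| par_tpeq t t' el el' er er' : par_t t t' -> par_e el el' -> par_e er er' ->
    par_t (TPEq t el er) (TPEq t' el' er').

Definition par_steps : expr -> expr -> Prop := clos_refl_trans expr par_e.

(* Main.v *)
Require Import Defs.
From Stdlib Require Import Arith Lia Relations.

Scheme expr_ind2 := Induction for expr Sort Prop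
with ty_ind2 := Induction for ty Sort Prop.
Combined Scheme expr_ty_ind from expr_ind2, ty_ind2.

Arguments Nat.ltb : simpl never.
Arguments Nat.eqb : simpl never.
Arguments Nat.leb : simpl never.

Ltac crush_var :=
  repeat (simpl; match goal with
   | |- context [?a <? ?b] => destruct (Nat.ltb_spec a b)
   | |- context [?a =? ?b] => destruct (Nat.eqb_spec a b)
   end); try lia; try (f_equal; lia).

Ltac use_ih := match goal with H : _ |- _ => rewrite H by lia end.

Lemma lift_lift :
  (forall e c c', c <= c' -> lift_e c (lift_e c' e) = lift_e (S c') (lift_e c e)) /\
  (forall t c c', c <= c' -> lift_t c (lift_t c' t) = lift_t (S c') (lift_t c t)).
Proof.
  apply expr_ty_ind; intros; simpl; try crush_var; f_equal; use_ih; reflexivity.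
Qed.

Lemma lift_lift0 s c : lift_e (S c) (lift_e 0 s) = lift_e 0 (lift_e c s).
Proof. symmetry; apply (proj1 lift_lift); lia. Qed.

Lemma lift_subst_lo :
  (forall e k c s, k <= c -> lift_e c (subst_e k s e) = subst_e k (lift_e c s) (lift_e (S c) e)) /\
  (forall t k c s, k <= c -> lift_t c (subst_t k s t) = subst_t k (lift_e c s) (lift_t (S c) t)).
Proof.
  apply expr_ty_ind; intros; simpl; try crush_var;
  f_equal; use_ih; rewrite ?lift_lift0; reflexivity.
Qed.

Lemma lift_subst_hi :
  (forall e k c s, c <= k -> lift_e c (subst_e k s e) = subst_e (S k) (lift_e c s) (lift_e c e)) /\
  (forall t k c s, c <= k -> lift_t c (subst_t k s t) = subst_t (S k) (lift_e c s) (lift_t c t)).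
Proof.
  apply expr_ty_ind; intros; simpl; try crush_var;
  f_equal; use_ih; rewrite ?lift_lift0; reflexivity.
Qed.

Lemma subst_lift :
  (forall e k u, subst_e k u (lift_e k e) = e) /\
  (forall t k u, subst_t k u (lift_t k t) = t).
Proof.
  apply expr_ty_ind; intros; simpl; try crush_var; f_equal; auto.
Qed.

Lemma subst_subst :
  (forall e j k v s, j <= k -> subst_e k s (subst_e j v e) = subst_e j (subst_e k s v) (subst_e (S k) (lift_e j s) e)) /\
  (forall t j k v s, j <= k -> subst_t k s (subst_t j v t) = subst_t j (subst_e k s v) (subst_t (S k) (lift_e j s) t)).
Proof.
  apply expr_ty_ind; intros; simpl.
  all: try (crush_var; rewrite (proj1 subst_lift); reflexivity).
  all: f_equal; use_ih; rewrite ?lift_lift0; try reflexivity.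
  all: rewrite (proj1 lift_subst_hi) by lia; reflexivity.
Qed.

Fixpoint occ_e (k : nat) (e : expr) : nat :=
  match e with
  | Const _ => 0
  | Var n => if n =? k then 1 else 0
  | App e1 e2 => occ_e k e1 + occ_e k e2
  | Lam t e => occ_t k t + occ_e (S k) e
  | BEq _ el er e => occ_e k el + occ_e k er + occ_e k e
  | XEq tx t el er e => occ_t k tx + occ_t (S k) t + occ_e k el + occ_e k er + occ_e k e
  end
with occ_t (k : nat) (t : ty) : nat :=
  match t with
  | TRef _ r => occ_e (S k) r
  | TArr tx t => occ_t k tx + occ_t (S k) t
  | TPEq t el er => occ_t k t + occ_e k el + occ_e k er
  end.

Lemma occ_lift_hi :
  (forall e c k, c <= k -> occ_e (S k) (lift_e c e) = occ_e k e) /\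
  (forall t c k, c <= k -> occ_t (S k) (lift_t c t) = occ_t k t).
Proof.
  apply expr_ty_ind; intros; simpl; try crush_var; repeat use_ih; reflexivity.
Qed.

Lemma occ_lift_eq :
  (forall e c, occ_e c (lift_e c e) = 0) /\
  (forall t c, occ_t c (lift_t c t) = 0).
Proof.
  apply expr_ty_ind; intros; simpl; try crush_var; repeat use_ih; reflexivity.
Qed.

Lemma occ_lift_lo :
  (forall e c k, k < c -> occ_e k (lift_e c e) = occ_e k e) /\
  (forall t c k, k < c -> occ_t k (lift_t c t) = occ_t k t).
Proof.
  apply expr_ty_ind; intros; simpl; try crush_var; repeat use_ih; reflexivity.
Qed.

Lemma occ_subst_hi :
  (forall x j k v, j <= k -> occ_e j (subst_e (S k) (lift_e j v) x) = occ_e j x) /\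
  (forall t j k v, j <= k -> occ_t j (subst_t (S k) (lift_e j v) t) = occ_t j t).
Proof.
  apply expr_ty_ind; intros; simpl; try (crush_var; apply (proj1 occ_lift_eq));
  rewrite <- ?lift_lift0; repeat use_ih; reflexivity.
Qed.

Lemma occ_subst_lo :
  (forall x j k a, j <= k -> occ_e k (subst_e j a x) = occ_e (S k) x + occ_e j x * occ_e k a) /\
  (forall t j k a, j <= k -> occ_t k (subst_t j a t) = occ_t (S k) t + occ_t j t * occ_e k a).
Proof.
  apply expr_ty_ind; intros; simpl; try (crush_var; fail).
  all: repeat use_ih; rewrite ?(proj1 occ_lift_hi) by lia; try lia.
Qed.

Lemma value_lift v c : is_value v -> is_value (lift_e c v).
Proof. induction 1; simpl; constructor; auto. Qed.
Lemma value_subst v k s : is_value v -> is_value (subst_e k s v).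
Proof. induction 1; simpl; constructor; auto. Qed.

Inductive parn : nat -> expr -> expr -> Prop :=
| pn_var n x : parn n (Var x) (Var x)
| pn_const n c : parn n (Const c) (Const c)
| pn_lam n n1 n2 t t' e e' : parnt n1 t t' -> parn n2 e e' -> n1 + n2 < n ->
    parn n (Lam t e) (Lam t' e')
| pn_app n n1 n2 e1 e1' e2 e2' : parn n1 e1 e1' -> parn n2 e2 e2' -> n1 + n2 < n ->
    parn n (App e1 e2) (App e1' e2')
| pn_beta n n1 n2 t e e' v v' : is_value v -> parn n1 e e' -> parn n2 v v' ->
    n1 + occ_e 0 e' * n2 < n ->
    parn n (App (Lam t e) v) (subst0 e' v')
| pn_eqb n b c1 : parn n (App (Const (CEqb b)) (Const c1)) (Const (CEqc c1 b))
| pn_eqc n c1 b c2 :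
    parn n (App (Const (CEqc c1 b)) (Const c2)) (Const (eq_result c1 c2))
| pn_beq n n1 n2 n3 b el el' er er' e e' : parn n1 el el' -> parn n2 er er' -> parn n3 e e' ->
    n1 + n2 + n3 < n -> parn n (BEq b el er e) (BEq b el' er' e')
| pn_xeq n n1 n2 n3 n4 n5 tx tx' t t' el el' er er' e e' :
    parnt n1 tx tx' -> parnt n2 t t' -> parn n3 el el' -> parn n4 er er' -> parn n5 e e' ->
    n1 + n2 + n3 + n4 + n5 < n ->
    parn n (XEq tx t el er e) (XEq tx' t' el' er' e')
with parnt : nat -> ty -> ty -> Prop :=
| pnt_ref n n1 b r r' : parn n1 r r' -> n1 < n -> parnt n (TRef b r) (TRef b r')
| pnt_arr n n1 n2 tx tx' t t' : parnt n1 tx tx' -> parnt n2 t t' -> n1 + n2 < n ->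
    parnt n (TArr tx t) (TArr tx' t')
| pnt_peq n n1 n2 n3 t t' el el' er er' : parnt n1 t t' -> parn n2 el el' -> parn n3 er er' ->
    n1 + n2 + n3 < n -> parnt n (TPEq t el er) (TPEq t' el' er').

Scheme parn_ind2 := Induction for parn Sort Prop
with parnt_ind2 := Induction for parnt Sort Prop.
Combined Scheme parn_mut from parn_ind2, parnt_ind2.

Scheme par_e_ind2 := Induction for par_e Sort Prop
with par_t_ind2 := Induction for par_t Sort Prop.
Combined Scheme par_mut from par_e_ind2, par_t_ind2.

Lemma parn_weak n m e e' : parn n e e' -> n <= m -> parn m e e'.
Proof. intros H Hm; destruct H; econstructor; eauto; lia. Qed.
Lemma parnt_weak n m e e' : parnt n e e' -> n <= m -> parnt m e e'.
Proof. intros H Hm; destruct H; econstructor; eauto; lia. Qed.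

Lemma parn_par :
  (forall n e e', parn n e e' -> par_e e e') /\ (forall n t t', parnt n t t' -> par_t t t').
Proof. apply parn_mut; intros; econstructor; eauto. Qed.

Lemma par_parn :
  (forall e e', par_e e e' -> exists n, parn n e e') /\ (forall t t', par_t t t' -> exists n, parnt n t t').
Proof.
  apply par_mut; intros;
  repeat match goal with H : exists _, _ |- _ => destruct H end;
  eexists; econstructor; eauto; try apply Nat.lt_succ_diag_r.
  Unshelve. all: exact 0.
Qed.

Lemma parn_lift :
  (forall n e e', parn n e e' -> forall c, parn n (lift_e c e) (lift_e c e')) /\
  (forall n t t', parnt n t t' -> forall c, parnt n (lift_t c t) (lift_t c t')).
Proof.
  apply parn_mut; intros; simpl; try (econstructor; eauto; fail).
  all: try (destruct (_ <? _); constructor; fail).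
  unfold subst0. rewrite (proj1 lift_subst_lo) by lia.
  econstructor; eauto using value_lift.
  rewrite (proj1 occ_lift_lo) by lia. assumption.
Qed.

Lemma parn_lift_e n e e' c : parn n e e' -> parn n (lift_e c e) (lift_e c e').
Proof. intros; apply parn_lift; auto. Qed.

Lemma parn_subst :
  (forall n e e', parn n e e' -> forall k m v v', parn m v v' ->
      parn (n + occ_e k e' * m) (subst_e k v e) (subst_e k v' e')) /\
  (forall n t t', parnt n t t' -> forall k m v v', parn m v v' ->
      parnt (n + occ_t k t' * m) (subst_t k v t) (subst_t k v' t')).
Proof.
  apply parn_mut; intros; simpl.
  - crush_var; try constructor. eapply parn_weak; eauto; lia.
  - constructor.
  - econstructor; eauto using parn_lift_e; nia.
  - econstructor; eauto; nia.
  - unfold subst0. rewrite (proj1 subst_subst) by lia.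
    econstructor; eauto using value_subst, parn_lift_e.
    rewrite (proj1 occ_subst_hi) by lia.
    rewrite (proj1 occ_subst_lo) by lia. nia.
  - constructor.
  - constructor.
  - econstructor; eauto; nia.
  - econstructor; eauto using parn_lift_e; nia.
  - econstructor; eauto using parn_lift_e; nia.
  - econstructor; eauto using parn_lift_e; nia.
  - econstructor; eauto using parn_lift_e; nia.
Qed.

Inductive sstep : expr -> expr -> Prop :=
| s_appl e1 e1' e2 : sstep e1 e1' -> sstep (App e1 e2) (App e1' e2)
| s_appr v e2 e2' : is_value v -> sstep e2 e2' -> sstep (App v e2) (App v e2')
| s_beq b el er e e' : sstep e e' -> sstep (BEq b el er e) (BEq b el er e')
| s_xeq tx t el er e e' : sstep e e' -> sstep (XEq tx t el er e) (XEq tx t el er e')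
| s_beta t e v : is_value v -> sstep (App (Lam t e) v) (subst0 e v)
| s_eqb b c1 : sstep (App (Const (CEqb b)) (Const c1)) (Const (CEqc c1 b))
| s_eqc c1 b c2 : sstep (App (Const (CEqc c1 b)) (Const c2)) (Const (eq_result c1 c2)).

Lemma step_sstep e e' : step e e' -> sstep e e'.
Proof.
  induction 1.
  - induction H; simpl; try constructor; auto.
  - constructor; auto.
  - constructor.
  - constructor.
Qed.

Lemma sstep_step e e' : sstep e e' -> step e e'.
Proof.
  induction 1.
  - exact (step_ctx (EAppL EHole e2) _ _ (WAppL _ _ WHole) IHsstep).
  - exact (step_ctx (EAppR v EHole) _ _ (WAppR _ _ H WHole) IHsstep).
  - exact (step_ctx (EBEq b el er EHole) _ _ (WBEq _ _ _ _ WHole) IHsstep).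
  - exact (step_ctx (EXEq tx t el er EHole) _ _ (WXEq _ _ _ _ _ WHole) IHsstep).
  - constructor; auto.
  - constructor.
  - constructor.
Qed.

Definition ssteps := clos_refl_trans expr sstep.

Lemma steps_ssteps e e' : steps e e' <-> ssteps e e'.
Proof.
  split; induction 1.
  all: try (apply rt_step; solve [auto using step_sstep, sstep_step]).
  all: try apply rt_refl.
  all: eapply rt_trans; eauto.
Qed.

Lemma ssteps_cong (f : expr -> expr) :
  (forall a b, sstep a b -> sstep (f a) (f b)) ->
  forall a b, ssteps a b -> ssteps (f a) (f b).
Proof. intros Hf a b; induction 1; [apply rt_step; auto | apply rt_refl | eapply rt_trans; eauto]. Qed.

Lemma ssteps_appl e1 e1' e2 : ssteps e1 e1' -> ssteps (App e1 e2) (App e1' e2).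
Proof. apply (ssteps_cong (fun x => App x e2)); intros; constructor; auto. Qed.
Lemma ssteps_appr v e2 e2' : is_value v -> ssteps e2 e2' -> ssteps (App v e2) (App v e2').
Proof. intro; apply (ssteps_cong (fun x => App v x)); intros; constructor; auto. Qed.
Lemma ssteps_beq b el er e e' : ssteps e e' -> ssteps (BEq b el er e) (BEq b el er e').
Proof. apply (ssteps_cong (fun x => BEq b el er x)); intros; constructor; auto. Qed.
Lemma ssteps_xeq tx t el er e e' : ssteps e e' -> ssteps (XEq tx t el er e) (XEq tx t el er e').
Proof. apply (ssteps_cong (fun x => XEq tx t el er x)); intros; constructor; auto. Qed.

Lemma value_nostep v e : is_value v -> sstep v e -> False.
Proof.
  intros H; revert e; induction H; intros e0 Hs; inversion Hs; subst; eauto.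
Qed.

Lemma par_value v v' : par_e v v' -> is_value v -> is_value v'.
Proof.
  intros Hp Hv; revert v' Hp; induction Hv; intros v0 Hp; inversion Hp; subst; constructor; auto.
Qed.

Lemma par_const_inv c x : par_e (Const c) x -> x = Const c.
Proof. intros H; inversion H; auto. Qed.

Lemma par_to_const v c : is_value v -> par_e v (Const c) -> v = Const c.
Proof. intros Hv H; inversion H; subst; auto; inversion Hv. Qed.

Lemma par_to_lam v t b : is_value v -> par_e v (Lam t b) -> exists t1 b1, v = Lam t1 b1 /\ par_e b1 b.
Proof. intros Hv H; inversion H; subst; eauto; inversion Hv. Qed.

Lemma par_subst e e' v v' : par_e e e' -> par_e v v' -> par_e (subst0 e v) (subst0 e' v').
Proof.
  intros H1 H2. apply (proj1 par_parn) in H1 as [n H1]. apply (proj1 par_parn) in H2 as [m H2].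
  eapply (proj1 parn_par). apply (proj1 parn_subst); eauto.
Qed.

Lemma par_refl : (forall e, par_e e e) /\ (forall t, par_t t t).
Proof. apply expr_ty_ind; intros; constructor; auto. Qed.

Lemma ss1 a b : sstep a b -> ssteps a b.
Proof. apply rt_step. Qed.
Lemma sstr a b c : ssteps a b -> ssteps b c -> ssteps a c.
Proof. apply rt_trans. Qed.

Lemma lemV : forall n e v, parn n e v -> is_value v ->
  exists v1, ssteps e v1 /\ is_value v1 /\ par_e v1 v.
Proof.
  intros n; induction n as [n IH] using (well_founded_induction lt_wf).
  intros e v H Hv; inversion H; subst.
  - inversion Hv.
  - exists (Const c); repeat split; [apply rt_refl | constructor | constructor].
  - eexists; split; [apply rt_refl|split; [constructor|]].
    eapply (proj1 parn_par); eauto.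
  - inversion Hv.
  -
    assert (Hs : parn (n1 + occ_e 0 e' * n2) (subst0 e0 v0) (subst0 e' v')).
    { apply (proj1 parn_subst); auto. }
    destruct (IH _ H3 _ _ Hs Hv) as [v1 [? [? ?]]].
    exists v1; split; [|split; auto]. apply sstr with (subst0 e0 v0); [apply ss1; apply s_beta; auto | auto].
  - eexists; split; [apply ss1; constructor | split; constructor].
  - eexists; split; [apply ss1; constructor | split; constructor].
  - inversion Hv; subst.
    destruct (IH n3 ltac:(lia) e0 e' ltac:(assumption) ltac:(assumption)) as [v1 [? [? ?]]].
    exists (BEq b el er v1); split; [apply ssteps_beq; auto | split; [constructor; auto|]].
    constructor; auto; eapply (proj1 parn_par); eauto.
  - inversion Hv; subst.
    destruct (IH n5 ltac:(lia) e0 e' ltac:(assumption) ltac:(assumption)) as [v1 [? [? ?]]].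
    exists (XEq tx t el er v1); split; [apply ssteps_xeq; auto | split; [constructor; auto|]].
    constructor; auto; eapply parn_par; eauto.
Qed.

Lemma pp n e e' : parn n e e' -> par_e e e'.
Proof. apply parn_par. Qed.
Lemma ppt n e e' : parnt n e e' -> par_t e e'.
Proof. apply parn_par. Qed.

Lemma lemS : forall n e1 e2, parn n e1 e2 -> forall e3, sstep e2 e3 ->
  exists e1', ssteps e1 e1' /\ par_e e1' e3.
Proof.
  intros n; induction n as [n IH] using (well_founded_induction lt_wf).
  intros e1 e2 H e3 Hs; inversion H; subst.
  - inversion Hs.
  - inversion Hs.
  - inversion Hs.
  -
    inversion Hs; subst.
    + destruct (IH n1 ltac:(lia) _ _ H0 _ ltac:(eassumption)) as [f' [Hf1 Hf2]].
      eexists; split; [apply ssteps_appl; exact Hf1 | constructor; eauto using pp].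
    + destruct (lemV _ _ _ H0 ltac:(assumption)) as [v1 [Hs1 [Hv1 Hp1]]].
      destruct (IH n2 ltac:(lia) _ _ H1 _ ltac:(eassumption)) as [a' [Ha1 Ha2]].
      exists (App v1 a'); split; [|constructor; auto].
      eapply sstr; [apply ssteps_appl; exact Hs1 | apply ssteps_appr; auto].
    + destruct (lemV _ _ _ H0 ltac:(constructor)) as [v1 [Hs1 [Hv1 Hp1]]].
      destruct (par_to_lam _ _ _ Hv1 Hp1) as [t1 [b1 [-> Hb]]].
      destruct (lemV _ _ _ H1 ltac:(assumption)) as [w1 [Hs2 [Hv2 Hp2]]].
      exists (subst0 b1 w1); split; [|apply par_subst; auto].
      eapply sstr; [apply ssteps_appl; exact Hs1|].
      eapply sstr; [apply ssteps_appr; [constructor|exact Hs2]|].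
      apply ss1; constructor; auto.
    + destruct (lemV _ _ _ H0 ltac:(constructor)) as [v1 [Hs1 [Hv1 Hp1]]].
      rewrite (par_to_const _ _ Hv1 Hp1) in Hs1.
      destruct (lemV _ _ _ H1 ltac:(constructor)) as [w1 [Hs2 [Hv2 Hp2]]].
      rewrite (par_to_const _ _ Hv2 Hp2) in Hs2.
      eexists; split; [|constructor].
      eapply sstr; [apply ssteps_appl; exact Hs1|].
      eapply sstr; [apply ssteps_appr; [constructor|exact Hs2]|].
      apply ss1; constructor; auto.
    + destruct (lemV _ _ _ H0 ltac:(constructor)) as [v1 [Hs1 [Hv1 Hp1]]].
      rewrite (par_to_const _ _ Hv1 Hp1) in Hs1.
      destruct (lemV _ _ _ H1 ltac:(constructor)) as [w1 [Hs2 [Hv2 Hp2]]].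
      rewrite (par_to_const _ _ Hv2 Hp2) in Hs2.
      eexists; split; [|constructor].
      eapply sstr; [apply ssteps_appl; exact Hs1|].
      eapply sstr; [apply ssteps_appr; [constructor|exact Hs2]|].
      apply ss1; constructor; auto.
  -
    assert (Hs' : parn (n1 + occ_e 0 e' * n2) (subst0 e v) (subst0 e' v')).
    { apply (proj1 parn_subst); auto. }
    destruct (IH _ H3 _ _ Hs' _ Hs) as [e1' [? ?]].
    exists e1'; split; auto.
    apply sstr with (subst0 e v); [apply ss1; apply s_beta; auto | auto].
  - inversion Hs.
  - inversion Hs.
  - inversion Hs; subst.
    destruct (IH n3 ltac:(lia) _ _ ltac:(eassumption) _ ltac:(eassumption)) as [x' [? ?]].
    exists (BEq b el er x'); split; [apply ssteps_beq; auto | constructor; eauto using pp].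
  - inversion Hs; subst.
    destruct (IH n5 ltac:(lia) _ _ ltac:(eassumption) _ ltac:(eassumption)) as [x' [? ?]].
    exists (XEq tx t el er x'); split; [apply ssteps_xeq; auto | constructor; eauto using pp, ppt].
Qed.

Lemma lemD e1 e1' : sstep e1 e1' -> forall e2, par_e e1 e2 ->
  exists e2', ssteps e2 e2' /\ par_e e1' e2'.
Proof.
  induction 1; intros e0 Hp.
  - inversion Hp; subst.
    + destruct (IHsstep _ ltac:(eassumption)) as [f' [Hf1 Hf2]].
      eexists; split; [apply ssteps_appl; exact Hf1 | constructor; auto].
    + inversion H.
    + inversion H.
    + inversion H.
  - inversion Hp; subst.
    + destruct (IHsstep _ ltac:(eassumption)) as [f' [Hf1 Hf2]].
      eexists; split; [apply ssteps_appr; [eapply par_value; eauto | exact Hf1] | constructor; auto].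
    + exfalso; eapply value_nostep; eauto.
    + inversion H0.
    + inversion H0.
  - inversion Hp; subst.
    destruct (IHsstep _ ltac:(eassumption)) as [f' [Hf1 Hf2]].
    eexists; split; [apply ssteps_beq; exact Hf1 | constructor; auto].
  - inversion Hp; subst.
    destruct (IHsstep _ ltac:(eassumption)) as [f' [Hf1 Hf2]].
    eexists; split; [apply ssteps_xeq; exact Hf1 | constructor; auto].
  - inversion Hp; subst.
    + inversion H2; subst.
      eexists; split; [apply ss1; apply s_beta; eapply par_value; eauto | apply par_subst; auto].
    + eexists; split; [apply rt_refl | apply par_subst; auto].
  - inversion Hp; subst.
    + apply par_const_inv in H1; apply par_const_inv in H3; subst.
      eexists; split; [apply ss1; constructor | constructor].
    + eexists; split; [apply rt_refl | constructor].
  - inversion Hp; subst.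
    + apply par_const_inv in H1; apply par_const_inv in H3; subst.
      eexists; split; [apply ss1; constructor | constructor].
    + eexists; split; [apply rt_refl | constructor].
Qed.

Lemma dir2 e1 c : ssteps e1 (Const c) -> forall e2, par_e e1 e2 -> ssteps e2 (Const c).
Proof.
  intros H. apply clos_rt_rt1n in H. remember (Const c) as k eqn:Ek.
  induction H; intros e2 Hp; subst.
  - apply par_const_inv in Hp; subst; apply rt_refl.
  - destruct (lemD _ _ H _ Hp) as [e2' [Hs Hp']].
    eapply sstr; [exact Hs | apply IHclos_refl_trans_1n; auto].
Qed.

Lemma dir1 e2 c : ssteps e2 (Const c) -> forall e1, par_e e1 e2 -> ssteps e1 (Const c).
Proof.
  intros H. apply clos_rt_rt1n in H. remember (Const c) as k eqn:Ek.
  induction H; intros e1 Hp; subst.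
  - apply (proj1 par_parn) in Hp as [n Hn].
    destruct (lemV _ _ _ Hn ltac:(constructor)) as [v1 [Hs [Hv Hp]]].
    rewrite (par_to_const _ _ Hv Hp) in Hs; exact Hs.
  - apply (proj1 par_parn) in Hp as [n Hn].
    destruct (lemS _ _ _ Hn _ H) as [e1' [Hs Hp']].
    eapply sstr; [exact Hs | apply IHclos_refl_trans_1n; auto].
Qed.

Theorem corollaryC17 (e1 e2 : expr) :
  par_steps e1 e2 ->
  forall c : const, steps e1 (Const c) <-> steps e2 (Const c).
Proof.
  induction 1; intros c.
  - rewrite !steps_ssteps; split; intros Hs.
    + eapply dir2; eauto.
    + eapply dir1; eauto.
  - tauto.
  - rewrite IHclos_refl_trans1; apply IHclos_refl_trans2.
Qed.
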